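(* Let $B$ be a finite set of Boolean functions. Then there exists a monadic second-order (MSO) formula $\theta_{\mathit{sat}}$ over the vocabulary $\tau_{B,\mathit{prop}}$ such that for every set $\Gamma$ of propositional $B$-formulae it holds that $\Gamma$ is satisfiable if and only if $\mathcal{A}_\Gamma \models \theta_{\mathit{sat}}$.
   Context: For a finite set $B$ of Boolean functions, a $B$-formula is a propositional formula built from propositional variables by applying functions $f\in B$ (0-ary functions of $B$ act as constants). Let $\tau_B$ be the vocabulary consisting of a unary relation symbol $\mathrm{const}_f$ for each $f\in B$ of arity $0$ and a binary relation symbol $\mathrm{conn}_{f,i}$ for each $f\in B$ and each $1\le i\le \mathrm{arity}(f)$. Let $\tau_{B,\mathit{prop}}=\tau_B\cup\{\mathrm{var},\mathrm{repr}\}$ with $\mathrm{var},\mathrm{repr}$ unary. For a set $\Gamma$ of $B$-formulae, $\mathcal{A}_\Gamma$ is the $\tau_{B,\mathit{prop}}$-structure whose universe is the set of subformulae of the formulae in $\Gamma$, where $\mathrm{var}(x)$ holds iff $x$ is a variable, $\mathrm{repr}(x)$ holds iff $x\in\Gamma$, $\mathrm{const}_f(x)$ holds iff $x$ is the constant $f$, and $\mathrm{conn}_{f,i}(x,y)$ holds iff $x$ is the $i$-th argument of the function $f$ at the root of the formula $y$. *)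

(* Defs.v *)
From mathcomp Require Import all_boot.
From Stdlib Require List.

Set Implicit Arguments.
Unset Strict Implicit.
Unset Printing Implicit Defensive.

(* The finite set B of Boolean functions is given as a finite index    *)
(* type I, an arity map ar : I -> nat, and for each i : I the Boolean   *)
(* function fn i : (ar i).-tuple bool -> bool.  0-ary functions are the *)
(* constants.                                                           *)

Inductive form (I : Type) : Type :=
  | FVar : nat -> form I
  | FApp : I -> seq (form I) -> form I.
Arguments FVar {I} _.
Arguments FApp {I} _ _.

Fixpoint wf (I : Type) (ar : I -> nat) (g : form I) : bool :=
  match g with
  | FVar _ => true
  | FApp i args => (size args == ar i) && all (wf ar) args
  end.

Fixpoint eval (I : Type) (ar : I -> nat)
    (fn : forall i, (ar i).-tuple bool -> bool) (v : nat -> bool) (g : form I)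
    : bool :=
  match g with
  | FVar n => v n
  | FApp i args =>
      let bs := map (eval fn v) args in
      if insub bs is Some t then fn i t else false
  end.

Definition satisfiable (I : Type) (ar : I -> nat)
    (fn : forall i, (ar i).-tuple bool -> bool) (Gamma : form I -> Prop) : Prop :=
  exists v : nat -> bool, forall g, Gamma g -> eval fn v g = true.

Inductive subf (I : Type) : form I -> form I -> Prop :=
  | subf_refl g : subf g g
  | subf_arg x i args a : List.In a args -> subf x a -> subf x (FApp i args).

Record vocab := Vocab { vsym : Type; varity : vsym -> nat }.

Record structure (V : vocab) := Structure {
  carrier :> Type;
  interp : forall s : vsym V, (varity s).-tuple carrier -> Prop }.

Inductive mso (V : vocab) : Type :=
  | MAtom (s : vsym V) (xs : (varity s).-tuple nat)
  | MEq (x y : nat)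
  | MMem (x X : nat)
  | MNot (phi : mso V)
  | MAnd (phi psi : mso V)
  | MEx1 (x : nat) (phi : mso V)
  | MEx2 (X : nat) (phi : mso V).

Fixpoint fv1 (V : vocab) (phi : mso V) : seq nat :=
  match phi with
  | MAtom _ xs => tval xs
  | MEq x y => [:: x; y]
  | MMem x _ => [:: x]
  | MNot p => fv1 p
  | MAnd p q => fv1 p ++ fv1 q
  | MEx1 x p => [seq y <- fv1 p | y != x]
  | MEx2 _ p => fv1 p
  end.

Fixpoint fv2 (V : vocab) (phi : mso V) : seq nat :=
  match phi with
  | MAtom _ _ | MEq _ _ => [::]
  | MMem _ X => [:: X]
  | MNot p => fv2 p
  | MAnd p q => fv2 p ++ fv2 q
  | MEx1 _ p => fv2 p
  | MEx2 X p => [seq Y <- fv2 p | Y != X]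
  end.

Definition sentence (V : vocab) (phi : mso V) : Prop :=
  fv1 phi = [::] /\ fv2 phi = [::].

(* Semantics.  First-order assignments are partial (option-valued) so that
   the empty structure is handled correctly; set variables range over all
   subsets of the universe. *)
Fixpoint msat (V : vocab) (A : structure V) (fo : nat -> option A)
    (so : nat -> A -> Prop) (phi : mso V) : Prop :=
  match phi with
  | MAtom s xs => exists ys : (varity s).-tuple A,
      map Some (tval ys) = map fo (tval xs) /\ interp ys
  | MEq x y => exists a : A, fo x = Some a /\ fo y = Some a
  | MMem x X => exists a : A, fo x = Some a /\ so X a
  | MNot p => ~ msat fo so p
  | MAnd p q => msat fo so p /\ msat fo so q
  | MEx1 x p => exists a : A,
      msat (fun y => if y == x then Some a else fo y) so p
  | MEx2 X p => exists P : A -> Prop,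
      msat fo (fun Y => if Y == X then P else so Y) p
  end.

Definition models (V : vocab) (A : structure V) (theta : mso V) : Prop :=
  @msat V A (fun _ => None) (fun _ _ => False) theta.

Inductive symB (I : Type) (ar : I -> nat) : Type :=
  | SConst (i : I) (_ : ar i = 0)
  | SConn (i : I) (k : 'I_(ar i))
  | SVar
  | SRepr.

Definition arityB (I : Type) (ar : I -> nat) (s : symB ar) : nat :=
  match s with
  | SConst _ _ => 1
  | SConn _ _ => 2
  | SVar | SRepr => 1
  end.

Definition tauBprop (I : Type) (ar : I -> nat) : vocab :=
  Vocab (@arityB I ar).

Definition univ (I : Type) (Gamma : form I -> Prop) : Type :=
  {x : form I | exists g, Gamma g /\ subf x g}.

Definition interpA (I : Type) (ar : I -> nat) (Gamma : form I -> Prop)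
    (s : symB ar) : (arityB s).-tuple (univ Gamma) -> Prop :=
  match s return (arityB s).-tuple (univ Gamma) -> Prop with
  | SConst i _ => fun t => proj1_sig (tnth t (inord 0)) = FApp i [::]
  | SConn i k => fun t =>
      (* x = t_0 is the (k+1)-th argument of f = i at the root of y = t_1 *)
      exists args, proj1_sig (tnth t (inord 1)) = FApp i args /\
                   nth (FVar 0) args k = proj1_sig (tnth t (inord 0))
  | SVar => fun t => exists n, proj1_sig (tnth t (inord 0)) = FVar n
  | SRepr => fun t => Gamma (proj1_sig (tnth t (inord 0)))
  end.

Definition A_Gamma (I : Type) (ar : I -> nat) (Gamma : form I -> Prop)
    : structure (tauBprop ar) :=
  @Structure (tauBprop ar) (univ Gamma) (@interpA I ar Gamma).

(* Main.v *)
Require Import Defs.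
From mathcomp Require Import all_boot.
From Stdlib Require Import Classical ClassicalEpsilon ProofIrrelevance.
From Stdlib Require List.

Set Implicit Arguments.
Unset Strict Implicit.
Unset Printing Implicit Defensive.

Section Aux.
Variables (I : finType) (ar : I -> nat) (fn : forall i : I, (ar i).-tuple bool -> bool).
Local Notation V := (tauBprop ar).

Definition mtrue : mso V := MNot (MEx1 0 (MNot (MEq V 0 0))).
Definition mimp (p q : mso V) := MNot (MAnd p (MNot q)).
Definition mall x (p : mso V) := MNot (MEx1 x (MNot p)).
Definition lit (b : bool) (p : mso V) := if b then p else MNot p.
Definition bigand (T : Type) (s : seq T) (F : T -> mso V) :=
  foldr (fun x acc => MAnd (F x) acc) mtrue s.

Definition cond (i : I) (t : (ar i).-tuple bool) : mso V :=
  match eq_comparable (ar i) 0 with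
  | left e => @MAtom V (SConst e) [tuple 0]
  | right _ => bigand (enum 'I_(ar i)) (fun k =>
       MEx1 1 (MAnd (@MAtom V (SConn k) [tuple 1; 0]) (lit (tnth t k) (MMem V 1 0))))
  end.

Definition theta : mso V :=
  MEx2 0 (MAnd (mall 0 (mimp (@MAtom V (SRepr ar) [tuple 0]) (MMem V 0 0)))
    (bigand (enum I) (fun i => bigand (enum {: (ar i).-tuple bool}) (fun t =>
       mall 0 (mimp (cond t) (lit (fn t) (MMem V 0 0))))))).

Lemma all_ex1 x s (p : mso V) : all (mem (x :: s)) (fv1 p) -> all (mem s) (fv1 (MEx1 x p)).
Proof.
rewrite /=; elim: (fv1 p) => //= y l IH /andP[Hy Hl].
case: eqP => /= [_|/eqP ne]; first by exact: IH.
rewrite IH // andbT; move: Hy; by rewrite inE (negbTE ne).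
Qed.

Lemma all_bigand (T : Type) (P : pred nat) (s : seq T) F :
  (forall x, all P (fv1 (F x))) -> all P (fv1 (bigand s F)).
Proof. move=> H; elim: s => //= x s IH; by rewrite all_cat H IH. Qed.

Lemma all_bigand2 (T : Type) (P : pred nat) (s : seq T) F :
  (forall x, all P (fv2 (F x))) -> all P (fv2 (bigand s F)).
Proof. move=> H; elim: s => //= x s IH; by rewrite all_cat H IH. Qed.

Lemma all_nil (s : seq nat) : all (mem [::]) s -> s = [::].
Proof. by case: s. Qed.

Lemma lit_fv1 b p : fv1 (lit b p) = fv1 p. Proof. by case: b. Qed.
Lemma lit_fv2 b p : fv2 (lit b p) = fv2 p. Proof. by case: b. Qed.

Lemma cond_fv1 i (t : (ar i).-tuple bool) : all (mem [:: 0]) (fv1 (cond t)).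
Proof.
rewrite /cond; case: eq_comparable => [e|ne] //.
apply: all_bigand => k; apply: all_ex1 => /=; rewrite lit_fv1 /=.
by [].
Qed.

Lemma cond_fv2 i (t : (ar i).-tuple bool) : all (mem [:: 0]) (fv2 (cond t)).
Proof.
rewrite /cond; case: eq_comparable => [e|ne] //.
apply: all_bigand2 => k /=; rewrite lit_fv2 /=. by [].
Qed.

Lemma theta_sentence : sentence theta.
Proof.
split.
- rewrite /theta /=.
  apply: all_nil; apply: all_bigand => i; apply: all_bigand => t.
  change (all (mem [::]) (fv1 (MEx1 0 (MNot (mimp (cond t) (lit (fn t) (MMem V 0 0))))))).
  apply: all_ex1. change (all (mem [:: 0]) (fv1 (cond t) ++ fv1 (lit (fn t) (MMem V 0 0)))).
  by rewrite all_cat cond_fv1 lit_fv1.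
- rewrite /theta /=.
  have H : all (mem [:: 0]) (fv2 (bigand (enum I) (fun i => bigand (enum {: (ar i).-tuple bool}) (fun t =>
       mall 0 (mimp (cond t) (lit (fn t) (MMem V 0 0))))))).
    apply: all_bigand2 => i; apply: all_bigand2 => t /=.
    by rewrite all_cat cond_fv2 lit_fv2.
  move: H; elim: (fv2 _) => //= y l IH /andP[Hy Hl].
  by move: Hy; rewrite inE => /eqP ->; rewrite eqxx IH.
Qed.


Section Sem.
Variable Gamma : form I -> Prop.
Local Notation A := (A_Gamma ar Gamma).
Implicit Types (fo : nat -> option A) (so : nat -> A -> Prop) (p q : mso V).

Lemma msat_true fo so : msat fo so mtrue.
Proof.
move=> /= [a]; apply; exists a; by [].
Qed.

Lemma msat_imp fo so p q : msat fo so (mimp p q) <-> (msat fo so p -> msat fo so q).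
Proof.
split => /=.
- move=> H Hp; apply: NNPP => Hq; exact: H.
- by move=> H [Hp Hq]; apply: Hq; apply: H.
Qed.

Lemma msat_all fo so x p :
  msat fo so (mall x p) <-> forall a : A, msat (fun y => if y == x then Some a else fo y) so p.
Proof.
split => /=.
- move=> H a; apply: NNPP => Hn; apply: H; by exists a.
- by move=> H [a Ha]; apply: Ha.
Qed.

Lemma msat_lit fo so b p : msat fo so (lit b p) <-> (msat fo so p <-> b).
Proof. case: b => /=; split. - by move=> H; split. - by case=> _ H; apply: H. - by move=> H; split => // Hp; case: H. - by move=> [H _] Hp; move: (H Hp). Qed.

Lemma msat_bigand (T : eqType) (s : seq T) F fo so :
  msat fo so (bigand s F) <-> forall x, x \in s -> msat fo so (F x).
Proof.
elim: s => [|y s IH] /=.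
- split=> // _; exact: msat_true.
- rewrite IH; split.
  + by move=> [H1 H2] x; rewrite inE => /orP[/eqP->|]; [|apply: H2].
  + move=> H; split; first by apply: H; rewrite inE eqxx.
    by move=> x xs; apply: H; rewrite inE xs orbT.
Qed.

Lemma msat_mem fo so x X a : fo x = Some a -> (msat fo so (MMem V x X) <-> so X a).
Proof.
move=> H /=; split; first by move=> [b [Hb Hs]]; move: Hb; rewrite H => -[->].
by move=> Hs; exists a.
Qed.

Lemma tnth_inord (T : Type) n (t : n.+1.-tuple T) k x0 :
  k <= n -> tnth t (inord k) = nth x0 t k.
Proof. by move=> Hk; rewrite (tnth_nth x0) inordK. Qed.

Lemma map_Some_inj (T : Type) (s1 s2 : seq T) : map Some s1 = map Some s2 -> s1 = s2.
Proof. elim: s1 s2 => [|x s1 IH] [|y s2] //= [-> /IH ->] //. Qed.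

Lemma msat_atom1 fo so (s : symB ar) (xs : (varity (v:=V) s).-tuple nat) (e : varity (v:=V) s = 1) x a :
  tval xs = [:: x] -> fo x = Some a ->
  (msat fo so (MAtom xs) <->
   exists ys : (varity (v:=V) s).-tuple A, tval ys = [:: a] /\ interp ys).
Proof.
move=> Hx Ha /=; rewrite Hx /= Ha; split.
- move=> [ys [Hm Hi]]; exists ys; split => //; exact: map_Some_inj.
- by move=> [ys [Hm Hi]]; exists ys; rewrite Hm.
Qed.

Lemma msat_repr fo so a : fo 0 = Some a ->
  (msat fo so (@MAtom V (SRepr ar) [tuple 0]) <-> Gamma (proj1_sig a)).
Proof.
move=> Ha /=; rewrite Ha; split.
- move=> [ys [Hm Hi]]; move: Hi; rewrite (tnth_inord _ a) //.
  by rewrite (map_Some_inj (s2 := [:: _]) Hm).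
- move=> H; exists [tuple a]; split => //; by rewrite (tnth_inord _ a).
Qed.

Lemma msat_const fo so i (e : ar i = 0) a : fo 0 = Some a ->
  (msat fo so (@MAtom V (SConst e) [tuple 0]) <-> proj1_sig a = FApp i [::]).
Proof.
move=> Ha /=; rewrite Ha; split.
- move=> [ys [Hm Hi]]; move: Hi; rewrite (tnth_inord _ a) //.
  by rewrite (map_Some_inj (s2 := [:: _]) Hm).
- move=> H; exists [tuple a]; split => //; by rewrite (tnth_inord _ a).
Qed.

Lemma msat_conn fo so i (k : 'I_(ar i)) a b : fo 0 = Some a -> fo 1 = Some b ->
  (msat fo so (@MAtom V (SConn k) [tuple 1; 0]) <->
   exists args, proj1_sig a = FApp i args /\ nth (FVar 0) args k = proj1_sig b).
Proof.
move=> Ha Hb /=; rewrite Ha Hb; split.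
- move=> [ys [Hm Hi]]; move: Hi; rewrite (tnth_inord _ a) // (tnth_inord _ a) //.
  by rewrite (map_Some_inj (s2 := [:: _; _]) Hm).
- move=> H; exists [tuple b; a]; split => //; by rewrite (tnth_inord _ a) // (tnth_inord _ a).
Qed.


Lemma cond_sem fo so i (t : (ar i).-tuple bool) a : fo 0 = Some a ->
  (msat fo so (cond t) <->
   ((ar i = 0 /\ proj1_sig a = FApp i [::]) \/
    (0 < ar i /\ forall k : 'I_(ar i), exists b : A,
       (exists args, proj1_sig a = FApp i args /\ nth (FVar 0) args k = proj1_sig b)
       /\ (so 0 b <-> tnth t k)))).
Proof.
move=> Ha; rewrite /cond; case: eq_comparable => [e|ne].
- rewrite (msat_const so e Ha); split; first by move=> H; left.
  by case=> [[_ ->]|[]] //; move=> H; exfalso; move: H; rewrite e.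
- rewrite msat_bigand; split.
  + move=> H; right; split; first by rewrite lt0n; apply/eqP.
    move=> k; have [b [Hc Hl]] := H k (mem_enum _ k).
    have Ha' : (fun y => if y == 1 then Some b else fo y) 0 = Some a := Ha.
    have Hb' : (fun y => if y == 1 then Some b else fo y) 1 = Some b := erefl.
    exists b; split.
    * exact: (proj1 (msat_conn so k Ha' Hb') Hc).
    * by move/msat_lit: Hl; rewrite (msat_mem so 0 Hb').
  + case=> [[e' He]|[Hp H]]; first by case: (ne e').
    move=> k _; have [b [Hc Hl]] := H k; exists b.
    have Ha' : (fun y => if y == 1 then Some b else fo y) 0 = Some a := Ha.
    have Hb' : (fun y => if y == 1 then Some b else fo y) 1 = Some b := erefl.
    split.
    * exact: (proj2 (msat_conn so k Ha' Hb') Hc).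
    * apply/msat_lit; rewrite (msat_mem so 0 Hb'); exact: Hl.
Qed.

End Sem.

Fixpoint form_ind' (P : form I -> Prop) (Hv : forall n, P (FVar n))
  (Ha : forall i args, (forall a, List.In a args -> P a) -> P (FApp i args)) (g : form I) : P g :=
  match g with
  | FVar n => Hv n
  | FApp i args => Ha i args
      ((fix aux (l : seq (form I)) : forall a, List.In a l -> P a :=
          match l with
          | [::] => fun a H => False_ind _ H
          | x :: s => fun a H => match H with
              | or_introl e => eq_ind x P (form_ind' Hv Ha x) a e
              | or_intror H' => aux s a H' end
          end) args)
  end.

Lemma all_In (T : Type) (p : pred T) s a : all p s -> List.In a s -> p a.
Proof. elim: s => //= x s IH /andP[Hx Hs] [<-|/IH]; by [|apply]. Qed.

Lemma In_nth (T : Type) (s : seq T) k d : k < size s -> List.In (nth d s k) s.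
Proof. elim: s k => [|x s IH] [|k] //= Hk; [by left | right; exact: IH]. Qed.

Lemma subf_wf (x g : form I) : subf x g -> wf ar g -> wf ar x.
Proof.
elim=> // y i args a Hin _ IH /= /andP[_ Hall]; apply: IH; exact: all_In Hall Hin.
Qed.

Lemma subf_trans (x y z : form I) : subf x y -> subf y z -> subf x z.
Proof. move=> Hxy Hyz; elim: Hyz Hxy => // y' i args a Hin _ IH H; apply: subf_arg Hin (IH H). Qed.

Lemma iff_eqb (c d : bool) : (c <-> d) -> c = d.
Proof. by case: c d => [] [] [H1 H2] //; [move: (H1 erefl) | move: (H2 erefl)]. Qed.

End Aux.

Theorem lemma1 (I : finType) (ar : I -> nat)
    (fn : forall i : I, (ar i).-tuple bool -> bool) :
  exists theta_sat : mso (tauBprop ar),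
    sentence theta_sat /\
    forall Gamma : form I -> Prop,
      (forall g, Gamma g -> wf ar g) ->
      (satisfiable fn Gamma <-> models (A_Gamma ar Gamma) theta_sat).
Proof.
exists (theta fn); split; first exact: theta_sentence.
move=> Gamma Hwf.
have wfA : forall a : A_Gamma ar Gamma, wf ar (proj1_sig a).
  move=> [x [g [Hg Hs]]] /=; exact: subf_wf Hs (Hwf g Hg).
split.
- move=> [v Hv].
  exists (fun a : A_Gamma ar Gamma => eval fn v (proj1_sig a) = true); split.
  + apply/msat_all => a; apply/msat_imp.
    have Ha : (fun y => if y == 0 then Some a else None) 0 = Some a := erefl.
    rewrite (msat_repr _ Ha) (msat_mem _ 0 Ha) => HG; exact: Hv.
  + apply/msat_bigand => i _; apply/msat_bigand => t _; apply/msat_all => a.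
    apply/msat_imp.
    have Ha : (fun y => if y == 0 then Some a else None) 0 = Some a := erefl.
    rewrite (cond_sem _ _ Ha) => Hc; apply/msat_lit; rewrite (msat_mem _ 0 Ha) /=.
    have E : eval fn v (sval a) = fn i t.
      case: Hc => [[e ->]|[Hp H]].
      * have Ht : tval t = [::] by apply: size0nil; rewrite size_tuple.
        by rewrite /= -Ht valK.
      * have [b [[args [Ea _]] _]] := H (Ordinal Hp).
        rewrite Ea.
        have Hs : size args = ar i by move: (wfA a); rewrite Ea /= => /andP[/eqP].
        have Hm : map (eval fn v) args = tval t.
          apply: (@eq_from_nth _ false); first by rewrite size_map size_tuple.
          move=> j; rewrite size_map Hs => Hj.
          have [b' [[args' [Ea' En]] Hb']] := H (Ordinal Hj).
          move: Ea'; rewrite Ea => -[Eargs]; subst args'.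
          rewrite /= (tnth_nth false) /= in Hb'.
          rewrite (nth_map (FVar 0)) ?Hs // En; exact: iff_eqb Hb'.
        by rewrite /= Hm valK.
    by rewrite E.
- move=> [P [HR HC]].
  pose v n := if excluded_middle_informative
      (exists a : A_Gamma ar Gamma, sval a = FVar n /\ P a) then true else false.
  have claim : forall g (h : exists g0, Gamma g0 /\ subf g g0),
      eval fn v g = true <-> P (exist _ g h).
    elim/form_ind' => [n|i args IH] h.
    + rewrite /= /v; case: excluded_middle_informative => [[[x hx] /= [Ex Px]]|Hn].
      * subst x; rewrite (proof_irrelevance _ hx h) in Px; by split.
      * split => // Ph; exfalso; apply: Hn; by exists (exist _ (FVar n) h).
    + have Hw : wf ar (FApp i args) := wfA (exist _ _ h).
      have /andP[/eqP Hs Hall] : (size args == ar i) && all (wf ar) args := Hw.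
      have Hsz : size (map (eval fn v) args) == ar i by rewrite size_map Hs.
      pose t : (ar i).-tuple bool := Tuple Hsz.
      have E : eval fn v (FApp i args) = fn i t by rewrite /= -[map _ args]/(tval t) valK.
      rewrite E.
      have HCi := HC.
      move/msat_bigand: HCi => /(_ i (mem_enum _ i))/msat_bigand/(_ t (mem_enum _ t)).
      move/msat_all => /(_ (exist _ _ h))/msat_imp HCi.
      have Ha : (fun y => if y == 0 then Some (exist _ (FApp i args) h : A_Gamma ar Gamma)
                          else None) 0 = Some (exist _ (FApp i args) h) := erefl.
      have Hcond : msat (fun y => if y == 0 then Some (exist _ (FApp i args) h : A_Gamma ar Gamma)
                          else None) (fun Y => if Y == 0 then P else fun _ => False) (cond t).
        apply/(cond_sem _ _ Ha).
        case: (posnP (ar i)) => [e|Hp].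
        * left; split => //=; congr FApp; apply: size0nil; by rewrite Hs.
        * right; split => // k.
          have Hk : k < size args by rewrite Hs.
          have hb : exists g0, Gamma g0 /\ subf (nth (FVar 0) args k) g0.
            case: h {E HCi Ha IH} => g0 [Hg0 Hsub]; exists g0; split => //.
            apply: subf_trans Hsub; exact: subf_arg (In_nth _ Hk) (subf_refl _).
          exists (exist _ (nth (FVar 0) args k) hb : A_Gamma ar Gamma); split; first by exists args.
          rewrite /= (tnth_nth false) /= (nth_map (FVar 0)) //.
          exact: iff_sym (IH _ (In_nth _ Hk) hb).
      move: (HCi Hcond) => /msat_lit; rewrite (msat_mem _ 0 Ha) /= => Hl.
      exact: iff_sym Hl.
  exists v => g Hg.
  have h : exists g0, Gamma g0 /\ subf g g0 by exists g; split => //; exact: subf_refl.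
  apply/(claim g h).
  have HR0 : msat (fun _ => None) (fun Y => if Y == 0 then P else fun _ => False)
    (mall 0 (mimp (@MAtom (tauBprop ar) (SRepr ar) [tuple 0]) (MMem _ 0 0))) := HR.
  move/msat_all: HR0 => /(_ (exist _ g h))/msat_imp HR'.
  have Ha : (fun y => if y == 0 then Some (exist _ g h : A_Gamma ar Gamma) else None) 0
            = Some (exist _ g h) := erefl.
  move: (HR' (proj2 (msat_repr _ Ha) Hg)); by rewrite (msat_mem _ 0 Ha).
Qed.
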